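(* Let $G=(V,E,C,\ell)$ be an edge-labeled graph with exactly two categories $C=\{c_1,c_2\}$. Construct an undirected weighted graph $G'$ on node set $V'=V\cup\{s,t\}$, where $s=v_{c_1}$ and $t=v_{c_2}$ are two new terminal nodes, as follows: for each edge $\{i,j\}\in E$ with label $c=\ell(\{i,j\})$, add the three edges $\{i,j\}$, $\{v_c,i\}$, $\{v_c,j\}$, each of weight $\tfrac12$; weights of repeated edges are added. For $T\subseteq V'$ let $\mathrm{cut}(T)$ denote the total weight of edges of $G'$ with one endpoint in $T$ and the other in $V'\setminus T$. Then for every $S\subseteq V$, \[ \mathrm{cut}(S\cup\{s\})=\mathrm{CatEdgeClus}(Y_S), \] where $Y_S:V\to C$ is the clustering with $Y_S[i]=c_1$ for $i\in S$ and $Y_S[i]=c_2$ for $i\in V\setminus S$.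
   Context: An edge-labeled graph $G=(V,E,C,\ell)$ consists of a finite node set $V$, a finite collection $E$ of edges (2-element subsets of $V$), a finite set $C$ of categories, and a labeling $\ell:E\to C$. A (categorical) clustering is a map $Y:V\to C$. For $e\in E$, the mistake function is $m_Y(e)=1$ if $Y[i]\neq \ell(e)$ for some node $i\in e$, and $m_Y(e)=0$ otherwise. The Categorical Edge Clustering objective is $\mathrm{CatEdgeClus}(Y)=\sum_{e\in E} m_Y(e)$. *)

(* Defs.v *)
From HB Require Import structures.
From mathcomp Require Import all_boot all_order all_algebra.
Set Implicit Arguments. Unset Strict Implicit. Unset Printing Implicit Defensive.
Import Order.TTheory GRing.Theory Num.Theory.

(* An edge-labeled graph (V, E, C, l): V and C finite types; E is a finite
   collection (a sequence, so repeated edges are allowed) of labeled edges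
   ((i, j), l(e)) with i <> j. *)
Definition ledge (V C : Type) := ((V * V) * C)%type.

Definition proper_edges (V : eqType) (C : Type) (E : seq (ledge V C)) : bool :=
  all (fun e : ledge V C => e.1.1 != e.1.2) E.

Definition mistake (V C : eqType) (Y : V -> C) (e : ledge V C) : bool :=
  (Y e.1.1 != e.2) || (Y e.1.2 != e.2).

Definition CatEdgeClus (V C : eqType) (E : seq (ledge V C)) (Y : V -> C) : nat :=
  \sum_(e <- E) mistake Y e.

(* The auxiliary graph G' on V' = V + C, where the terminal v_c is inr c.
   Each labeled edge ({i,j}, c) contributes the three (unordered) edges
   {i,j}, {v_c,i}, {v_c,j}, each of weight 1/2. *)
Definition aux_edges (V C : Type) (E : seq (ledge V C)) : seq ((V + C) * (V + C)) :=
  flatten [seq [:: (inl e.1.1, inl e.1.2); (inr e.2, inl e.1.1); (inr e.2, inl e.1.2)]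
          | e <- E].

Definition aux_weight (V C : finType) (E : seq (ledge V C)) (x y : V + C) : rat :=
  \sum_(p <- aux_edges E | ((p.1 == x) && (p.2 == y)) || ((p.1 == y) && (p.2 == x)))
     (1 / 2)%R.

Definition aux_cut (V C : finType) (E : seq (ledge V C)) (T : {set V + C}) : rat :=
  (\sum_(x in T) \sum_(y in ~: T) aux_weight E x y)%R.

Definition YS (V C : finType) (c1 c2 : C) (S : {set V}) : V -> C :=
  fun i => if i \in S then c1 else c2.

(* Main.v *)
Require Import Defs.
From mathcomp Require Import all_boot all_order all_algebra ring lra.
Import Order.TTheory GRing.Theory Num.Theory.
Set Implicit Arguments. Unset Strict Implicit.

Lemma sum_eq_and (T : finType) (D : {pred T}) (z : T) (c : bool) :
  (\sum_(y in D) ((z == y) && c) = (z \in D) && c)%N.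
Proof.
case: c; last by rewrite andbF big1 // => y _; rewrite andbF.
rewrite andbT; case Hz: (z \in D).
  rewrite (bigD1 z) //= eqxx big1 // => y /andP [_ Hy].
  by rewrite eq_sym (negbTE Hy).
rewrite big1 // => y Hy; case: eqP => // E; subst.
by rewrite Hy in Hz.
all: by [].
Qed.

Definition cross (V C : finType) (T : {set V + C}) (a b : V + C) : nat :=
  ((a \in T) && (b \notin T)) + ((b \in T) && (a \notin T)).

Lemma N_eq (V C : finType) (T : {set V + C}) (a b : V + C) :
  (\sum_(x in T) \sum_(y in ~: T)
     (((a == x) && (b == y)) || ((b == x) && (a == y))) = cross T a b)%N.
Proof.
rewrite (eq_bigr (fun x => nat_of_bool ((a == x) && (b \notin T)) + nat_of_bool ((b == x) && (a \notin T))))%N.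
  by rewrite big_split /= !sum_eq_and.
move=> x Hx.
rewrite (eq_bigr (fun y => nat_of_bool ((a == x) && (b == y)) + nat_of_bool ((b == x) && (a == y))))%N.
  rewrite big_split /=.
  under eq_bigr => y _ do rewrite andbC.
  under [X in _ + X]eq_bigr => y _ do rewrite andbC.
  rewrite !sum_eq_and.
  by rewrite !in_setC (andbC (a == x)) (andbC (b == x)).
move=> y; rewrite in_setC => Hy.
case: (a =P x) => [Ea|_]; case: (b =P y) => [Eb|_];
  case: (b =P x) => [Eb'|_]; case: (a =P y) => [Ea'|_] //=; subst.
by rewrite Hx in Hy.
all: by [].
Qed.

Theorem mainTheorem1 (V C : finType) (c1 c2 : C) (E : seq (ledge V C)) :
  c1 != c2 -> (forall c : C, c = c1 \/ c = c2) ->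
  proper_edges E ->
  forall S : {set V},
    aux_cut E ((@inl V C) @: S :|: [set inr c1]) = ((CatEdgeClus E (YS c1 c2 S))%:R)%R.
Proof.
move=> n12 hC _ S.
set T := (_ :|: _).
have -> : aux_cut E T = (\sum_(p <- aux_edges E) (cross T p.1 p.2)%:R / 2)%R.
  rewrite /aux_cut /aux_weight.
  under eq_bigr => x _ do under eq_bigr => y _ do rewrite big_mkcond /=.
  under eq_bigr => x _ do rewrite exchange_big /=.
  rewrite exchange_big /=; apply: eq_bigr => p _.
  rewrite -(N_eq T p.1 p.2) natr_sum mulr_suml; apply: eq_bigr => x _.
  rewrite natr_sum mulr_suml; apply: eq_bigr => y _.
  by rewrite [(p.2 == x) && _]andbC; case: ifP; rewrite ?mul0r.
rewrite /aux_edges big_flatten /= big_map /CatEdgeClus natr_sum.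
apply: eq_bigr => [[[i j] c]] _.
rewrite !big_cons big_nil /= /cross /mistake /YS /T !inE.
have inlS : forall k, ((@inl V C) k \in [set inl x | x in S]) = (k \in S).
  by move=> k; rewrite mem_imset // => a b [].
have inrS : forall k, (inr k \in [set (@inl V C) x | x in S]) = false.
  by move=> k; apply/negbTE/imsetP => [[x _]].
rewrite !inlS !inrS /=.
have e1 : forall k c', ((@inl V C) k == inr c') = false by [].
have e2 : forall c', ((@inr V C) c == inr c') = (c == c') by [].
rewrite !e1 !e2 !orbF.
have n21 : (c2 == c1) = false by apply/negbTE; rewrite eq_sym.
case: (hC c) => ->; rewrite ?eqxx ?n21 ?(negbTE n12);
  case: (i \in S); case: (j \in S); rewrite /= ?eqxx ?n21 ?(negbTE n12) /=; field.
all: by [].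
Qed.
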